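(* Let $s\ge2$ and $n\ge1$ be integers and $r_\pm=s\left(1\pm\sqrt{1-1/s}\right)$. Then $$\dim\ker(H_n^s)=\sum_{k=0}^n|T_k|=\frac{r_+^{n+1}+r_-^{n+1}-2}{2(s-1)},$$ and asymptotically $\dim\ker(H_n^s)\approx r_+^{n+1}/[2(s-1)]$ (the ratio tends to $1$ as $n\to\infty$).
   Context: Let $\Sigma=\{-s,\dots,s\}$, $\Sigma_*=\Sigma\setminus\{0\}$. The spin chain on $n$ sites has local space $\mathbb{C}^{2s+1}$ with basis $\{|j\rangle:j\in\Sigma\}$. For $m\in\Sigma_*$, $P^m=|\phi_m\rangle\langle\phi_m|$ with $|\phi_m\rangle=\frac1{\sqrt2}(|0,m\rangle-|m,0\rangle)$; for $m\in\{1,\dots,s\}$, $Q^m=|\chi_m\rangle\langle\chi_m|$ with $|\chi_m\rangle=\frac1{\sqrt2}(|0,0\rangle-|m,-m\rangle)$, acting on two neighboring spins. $H_n^s=\sum_{k=1}^{n-1}\big(\sum_{m\in\Sigma_*}P^m_{k,k+1}+\sum_{m=1}^sQ^m_{k,k+1}\big)$. For $k\ge0$, $T_k\subseteq\Sigma_*^k$ is the set of strings $t_1\cdots t_k$ with no index $j$ such that $t_j=m\in\{1,\dots,s\}$ and $t_{j+1}=-m$ ($T_0$ consists of the empty string). *)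

(* Defs.v *)
From HB Require Import structures.
From mathcomp Require Import all_boot all_order all_algebra.
From mathcomp Require Import algC.
Set Implicit Arguments. Unset Strict Implicit. Unset Printing Implicit Defensive.
Import Order.TTheory GRing.Theory Num.Theory.
Local Open Scope ring_scope.

(* Local basis |j>, j in Sigma = {-s..s}, indexed by 'I_(2s+1): index i <-> spin i - s *)
Definition spin (s : nat) (i : 'I_(2 * s + 1)) : int := (i : nat)%:Z - s%:Z.

(* configurations of n spins (basis of (C^(2s+1))^{(x) n}) *)
Definition conf (s n : nat) := {ffun 'I_n -> 'I_(2 * s + 1)}.

(* |phi_m> = (|0,m> - |m,0>)/sqrt 2, as a function of the two-site basis label (a,b) *)
Definition phiv (m a b : int) : algC :=
  (sqrtC 2)^-1 * (((a == 0) && (b == m))%:R - ((a == m) && (b == 0))%:R).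
(* |chi_m> = (|0,0> - |m,-m>)/sqrt 2 *)
Definition chiv (m a b : int) : algC :=
  (sqrtC 2)^-1 * (((a == 0) && (b == 0))%:R - ((a == m) && (b == - m))%:R).

(* matrix element <a,b| h |c,d> of the two-site interaction
   h = sum_{m in Sigma_*} P^m + sum_{m=1}^s Q^m *)
Definition hloc (s : nat) (a b c d : int) : algC :=
  \sum_(i : 'I_(2 * s + 1) | spin i != 0) phiv (spin i) a b * (phiv (spin i) c d)^*
  + \sum_(m < s) chiv (m.+1)%:Z a b * (chiv (m.+1)%:Z c d)^*.

(* matrix element <x| H_n^s |y>: sum over neighbouring pairs (k, k+1) *)
Definition Hentry (s n : nat) (x y : conf s n) : algC :=
  \sum_(k : 'I_n) \sum_(k' : 'I_n | (k' : nat) == k.+1)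
    ([forall l : 'I_n, ((l != k) && (l != k')) ==> (x l == y l)])%:R
    * hloc s (spin (x k)) (spin (x k')) (spin (y k)) (spin (y k')).

Definition Hmat (s n : nat) : 'M[algC]_(#|conf s n|) :=
  \matrix_(i, j) Hentry (enum_val i) (enum_val j).

(* dim ker H_n^s : dimension of {v column vector | H v = 0} *)
Definition dimker (s n : nat) : nat := \rank (kermx (Hmat s n)^T).

(* T_k : strings in Sigma_*^k with no j such that t_j = m in {1..s}, t_{j+1} = -m *)
Definition Tset (s k : nat) : {set {ffun 'I_k -> 'I_(2 * s + 1)}} :=
  [set t : {ffun 'I_k -> 'I_(2 * s + 1)} | [forall j : 'I_k, spin (t j) != 0] &&
           [forall j : 'I_k, forall j' : 'I_k,
              ((j' : nat) == j.+1) ==> ~~ ((0 < spin (t j)) && (spin (t j') == - spin (t j)))]].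

Definition rplus (s : nat) : algC := s%:R * (1 + sqrtC (1 - (s%:R)^-1)).
Definition rminus (s : nat) : algC := s%:R * (1 - sqrtC (1 - (s%:R)^-1)).

(* Main.v *)
Require Import Defs.
From HB Require Import structures.
From mathcomp Require Import all_boot all_order all_algebra.
From mathcomp Require Import algC.
From mathcomp Require Import ring lra zify.
Import Order.TTheory GRing.Theory Num.Theory.
Local Open Scope ring_scope.

Definition Pw (s j : nat) : algC := rplus s ^+ j + rminus s ^+ j.

Lemma rpm_facts (s : nat) : (2 <= s)%N ->
  [/\ rplus s + rminus s = 2 * s%:R, rplus s * rminus s = s%:R,
      2 <= rplus s & 0 <= rminus s <= 1].
Proof.
move=> hs.
have s0 : (s%:R : algC) != 0 by rewrite pnatr_eq0; case: s hs.
have sge2 : (2 : algC) <= s%:R by rewrite (ler_nat _ 2 s).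
set x : algC := sqrtC (1 - (s%:R)^-1).
have s0' : (0 : algC) < s%:R by apply: (lt_le_trans _ sge2).
have s1 : (1 : algC) <= s%:R by apply: (le_trans _ sge2); rewrite ler1n.
have hi1 : (s%:R : algC)^-1 <= 1 by rewrite invf_le1.
have hi0 : (0 : algC) <= (s%:R)^-1 by rewrite invr_ge0 ltW.
have hx0 : 0 <= 1 - (s%:R : algC)^-1 by rewrite subr_ge0.
have hxx : x ^+ 2 = 1 - (s%:R)^-1 by rewrite sqrtCK.
have x0 : 0 <= x by rewrite sqrtC_ge0.
have x1 : x <= 1.
  by rewrite -sqrtC1 ler_sqrtC // ?qualifE /= ?ler01 // lerBlDr lerDl.
rewrite /rplus /rminus -/x; split.
- ring.
- have -> : s%:R * (1 + x) * (s%:R * (1 - x)) = s%:R * s%:R * (1 - x ^+ 2) by ring.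
  rewrite hxx opprB addrC subrK mulrK //; exact: unitf_gt0.
- apply: le_trans sge2 _; rewrite ler_pMr ?lerDl //.
- apply/andP; split; first by rewrite mulr_ge0 ?subr_ge0 // ltW.
  have : (s%:R : algC) * (1 - x) * (1 + x) = 1.
    have -> : s%:R * (1 - x) * (1 + x) = s%:R * (1 - x ^+ 2) by ring.
    rewrite hxx mulrBr mulr1 mulrDr mulr1 mulrN mulfV //; ring.
  move=> h; rewrite -[leRHS]h; apply: ler_peMr; last by rewrite lerDl.
  by rewrite mulr_ge0 ?subr_ge0 // ltW.
Qed.

Lemma Pw_rec (s j : nat) : (2 <= s)%N ->
  Pw s j.+2 = 2 * s%:R * Pw s j.+1 - s%:R * Pw s j.
Proof.
move=> hs; have [h1 h2 _ _] := rpm_facts _ hs.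
rewrite /Pw -h1 -h2 !exprS; ring.
Qed.

Lemma closed_form (s : nat) (g : nat -> nat) : (2 <= s)%N ->
  g 0%N = 1%N -> g 1%N = (2 * s)%N ->
  (forall k, g k.+2 + s * g k = 2 * s * g k.+1)%N ->
  forall n, ((\sum_(k < n.+1) g k)%N%:R : algC) = (Pw s n.+1 - 2) / (2 * (s%:R - 1)).
Proof.
move=> hs g0 g1 grec.
have [h1 h2 _ _] := rpm_facts _ hs.
have c0 : (2 * (s%:R - 1) : algC) != 0.
  rewrite mulf_neq0 ?pnatr_eq0 // subr_eq0 pnatr_eq1; apply/negP=> /eqP e; by rewrite e in hs.
have key : forall k, (g k)%:R * (2 * (s%:R - 1)) = Pw s k.+1 - Pw s k :> algC.
  suff: forall k, (g k)%:R * (2 * (s%:R - 1)) = Pw s k.+1 - Pw s k :> algC /\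
                  (g k.+1)%:R * (2 * (s%:R - 1)) = Pw s k.+2 - Pw s k.+1 :> algC.
    by move=> H k; case: (H k).
  elim=> [|k [IH1 IH2]].
    rewrite g0 g1 /Pw !expr0 !expr1 h1.
    split; first by rewrite mulr1n; ring.
    have -> : rplus s ^+ 2 + rminus s ^+ 2 = (rplus s + rminus s)^+2 - 2 * (rplus s * rminus s) by ring.
    rewrite h1 h2 natrM; ring.
  split=> //.
  have e : ((g k.+2)%:R : algC) = 2 * s%:R * (g k.+1)%:R - s%:R * (g k)%:R.
    apply/eqP; rewrite eq_sym subr_eq -!natrM -natrD grec natrM natrM //.
  rewrite e (Pw_rec _ k.+1 hs).
  have -> : (2 * s%:R * (g k.+1)%:R - s%:R * (g k)%:R) * (2 * (s%:R - 1))
     = 2 * s%:R * ((g k.+1)%:R * (2 * (s%:R - 1))) - s%:R * ((g k)%:R * (2 * (s%:R - 1)))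
     :> algC by ring.
  rewrite IH1 IH2 (Pw_rec _ _ hs); ring.
move=> n; apply: (mulIf c0); rewrite mulfVK // natr_sum mulr_suml.
under eq_bigr do rewrite key.
rewrite -(big_mkord xpredT (fun k => Pw s k.+1 - Pw s k)) (telescope_sumr (fun k => Pw s k)) //.
Qed.

Lemma asym (s : nat) : (2 <= s)%N ->
  forall eps : algC, 0 < eps -> exists N : nat, forall n : nat, (N <= n)%N ->
     `| ((Pw s n.+1 - 2) / (2 * (s%:R - 1))) / (rplus s ^+ n.+1 / (2 * (s%:R - 1))) - 1 | < eps.
Proof.
move=> hs eps he.
have [h1 h2 rp2 /andP[rm0 rm1]] := rpm_facts _ hs.
have c0 : (2 * (s%:R - 1) : algC) != 0.
  rewrite mulf_neq0 ?pnatr_eq0 // subr_eq0 pnatr_eq1; apply/negP=> /eqP e; by rewrite e in hs.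
have rp0 : 0 < rplus s by apply: lt_le_trans rp2.
exists (Num.Def.archi_bound (3 / eps)) => n hn.
have rpn0 : 0 < rplus s ^+ n.+1 by rewrite exprn_gt0.
have -> : (Pw s n.+1 - 2) / (2 * (s%:R - 1)) / (rplus s ^+ n.+1 / (2 * (s%:R - 1))) - 1
   = (rminus s ^+ n.+1 - 2) / rplus s ^+ n.+1.
  rewrite invf_div mulrA divfK // /Pw.
  apply: (mulIf (lt0r_neq0 rpn0)); rewrite mulrBl divfK ?lt0r_neq0 // mul1r divfK ?lt0r_neq0 //; ring.
rewrite normrM normfV (gtr0_norm rpn0) ltr_pdivrMr //.
have hb := archi_boundP (x := 3 / eps) (divr_ge0 (ler0n _ 3) (ltW he)).
have : 3 < eps * rplus s ^+ n.+1.
  rewrite -ltr_pdivrMl // mulrC.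
  apply: (lt_le_trans hb).
  apply: (le_trans (y := (n.+1)%:R)); first by rewrite ler_nat; apply: leqW.
  apply: (le_trans (y := 2 ^+ n.+1)).
    rewrite -natrX ler_nat; exact: ltnW (ltn_expl _ (isT : (1 < 2)%N)).
  by apply: lerXn2r => //; rewrite qualifE /= ?ler0n // ltW.
apply: le_lt_trans.
apply: (le_trans (ler_normD _ _)); rewrite normrN normrX (ger0_norm rm0).
have : rminus s ^+ n.+1 <= 1 by apply: exprn_ile1.
rewrite (ger0_norm (ler0n _ 2)) => h; have -> : (3 : algC) = 1 + 2 by [].
by rewrite lerD2r.
Qed.


Set Implicit Arguments. Unset Strict Implicit. Unset Printing Implicit Defensive.

Lemma z0_proof (s : nat) : (s < 2 * s + 1)%N. Proof. lia. Qed.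
Definition z0 (s : nat) : 'I_(2 * s + 1) := Ordinal (z0_proof s).

Lemma spin_inj (s : nat) (a b : 'I_(2 * s + 1)) : (spin a == spin b) = (a == b).
Proof.
rewrite /spin; apply/eqP/eqP => [h|->//]; apply: val_inj => /=.
by move/eqP: h; rewrite -subr_eq0 opprB addrA subrK subr_eq0 => /eqP [].
Qed.

Lemma spin_z0 (s : nat) : spin (z0 s) = 0.
Proof. by rewrite /spin /= subrr. Qed.

Lemma spin_eq0 (s : nat) (a : 'I_(2 * s + 1)) : (spin a == 0) = (a == z0 s).
Proof. by rewrite -(spin_z0 s) spin_inj. Qed.

Definition nzb (s : nat) (c : 'I_(2 * s + 1)) : bool := spin c != 0.
Definition bad (s : nat) (a b : 'I_(2 * s + 1)) : bool :=
  (0 < spin a) && (spin b == - spin a).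
Definition nbad (s : nat) : rel 'I_(2 * s + 1) := fun a b => ~~ bad a b.

Definition stepr (s : nat) (a : 'I_(2 * s + 1)) (acc : seq 'I_(2 * s + 1)) :=
  match acc with
  | d :: r => if bad a d then r else a :: acc
  | [::] => [:: a]
  end.
Definition red (s : nat) (w : seq 'I_(2 * s + 1)) := foldr (@stepr s) [::] w.
Definition nz (s : nat) (l : seq 'I_(2 * s + 1)) := filter (@nzb s) l.
Definition Pw' (s : nat) (w : seq 'I_(2 * s + 1)) := all (@nzb s) w && sorted (@nbad s) w.

Lemma bad_nz (s : nat) (a b : 'I_(2 * s + 1)) : bad a b -> nzb a /\ nzb b.
Proof.
rewrite /bad /nzb => /andP[h /eqP ->]; rewrite oppr_eq0.
by split; rewrite gt_eqF.
Qed.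

Lemma bad_snd (s : nat) (a b : 'I_(2 * s + 1)) c : bad a b -> ~~ bad b c.
Proof.
rewrite /bad => /andP[h /eqP ->]; rewrite oppr_gt0 ltNge ltW //.
Qed.

Lemma red_cancel (s : nat) (a b : 'I_(2 * s + 1)) v : bad a b -> red [:: a, b & v] = red v.
Proof.
move=> hab; rewrite /red /=.
case E: (foldr (@stepr s) [::] v) => [|d r] /=; first by rewrite hab.
by rewrite (negbTE (bad_snd _ hab)) /= hab.
Qed.

Lemma size_red (s : nat) (w : seq 'I_(2 * s + 1)) : (size (red w) <= size w)%N.
Proof.
elim: w => //= a w IH; rewrite /red /= -/(red w).
case: (red w) IH => [|d r] //= IH.
case: ifP => _ /=; lia.
Qed.

Lemma red_P (s : nat) (w : seq 'I_(2 * s + 1)) : all (@nzb s) w -> Pw' (red w).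
Proof.
elim: w => //= a w IH /andP[na /IH]; rewrite /red /= -/(red w).
case: (red w) => [|d r] /=; first by rewrite /Pw' /= na.
rewrite /Pw' /= => /andP[/andP[nd nr] pr].
case: ifP => hb /=.
  by rewrite /Pw' nr; case: r pr {nr} => //= e r /andP[].
by rewrite na nd nr /= /nbad hb.
Qed.

Lemma red_id (s : nat) (w : seq 'I_(2 * s + 1)) : Pw' w -> red w = w.
Proof.
elim: w => //= a w IH; rewrite /Pw' /= => /andP[/andP[na nw] pw].
rewrite /red /= -/(red w) IH; last first.
  by rewrite /Pw' nw; case: w pw {IH nw} => //= e w /andP[].
by case: w pw {IH nw} => //= d w /andP[/negbTE -> _].
Qed.

Lemma nz_id (s : nat) (w : seq 'I_(2 * s + 1)) : all (@nzb s) w -> nz w = w.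
Proof. by move=> h; rewrite /nz; apply/all_filterP. Qed.

Definition Cn (s : nat) (l : seq 'I_(2 * s + 1)) :=
  red (nz l) ++ nseq (size l - size (red (nz l))) (z0 s).

Lemma size_Cn (s : nat) (l : seq 'I_(2 * s + 1)) : size (Cn l) = size l.
Proof.
rewrite /Cn size_cat size_nseq.
have := size_red (nz l); have : (size (nz l) <= size l)%N by rewrite size_filter count_size.
lia.
Qed.

Definition EqR (s n : nat) (f : seq 'I_(2 * s + 1) -> algC) (l1 l2 : seq 'I_(2 * s + 1)) : Prop :=
  size l1 = size l2 /\
  forall u v, size (u ++ l1 ++ v) = n -> f (u ++ l1 ++ v) = f (u ++ l2 ++ v).

Lemma EqR_refl s n f l : @EqR s n f l l.
Proof. by []. Qed.

Lemma EqR_sym s n f l1 l2 : @EqR s n f l1 l2 -> @EqR s n f l2 l1.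
Proof.
move=> [e h]; split=> // u v hs; rewrite h //.
by move: hs; rewrite !size_cat e.
Qed.

Lemma EqR_trans s n f l1 l2 l3 :
  @EqR s n f l1 l2 -> @EqR s n f l2 l3 -> @EqR s n f l1 l3.
Proof.
move=> [e1 h1] [e2 h2]; split; first by rewrite e1.
move=> u v hs; rewrite h1 // h2 //; by move: hs; rewrite !size_cat e1.
Qed.

Lemma EqR_ctx s n f x y l1 l2 :
  @EqR s n f l1 l2 -> @EqR s n f (x ++ l1 ++ y) (x ++ l2 ++ y).
Proof.
move=> [e h]; split; first by rewrite !size_cat e.
move=> u v hs.
have -> : u ++ (x ++ l1 ++ y) ++ v = (u ++ x) ++ l1 ++ (y ++ v) by rewrite !catA.
have -> : u ++ (x ++ l2 ++ y) ++ v = (u ++ x) ++ l2 ++ (y ++ v) by rewrite !catA.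
by apply: h; move: hs; rewrite !size_cat; lia.
Qed.

Lemma EqR_cons s n f a l1 l2 :
  @EqR s n f l1 l2 -> @EqR s n f (a :: l1) (a :: l2).
Proof. by move=> h; have := EqR_ctx [:: a] [::] h; rewrite !cats0. Qed.

Lemma EqR_catr s n f y l1 l2 :
  @EqR s n f l1 l2 -> @EqR s n f (l1 ++ y) (l2 ++ y).
Proof. by move=> h; have := EqR_ctx [::] y h. Qed.

Lemma connect_Cn (s n : nat) (f : seq 'I_(2 * s + 1) -> algC) :
  (forall u v a, size (u ++ [:: z0 s; a] ++ v) = n ->
      f (u ++ [:: z0 s; a] ++ v) = f (u ++ [:: a; z0 s] ++ v)) ->
  (forall u v a b, bad a b -> size (u ++ [:: a; b] ++ v) = n ->
      f (u ++ [:: a; b] ++ v) = f (u ++ [:: z0 s; z0 s] ++ v)) ->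
  forall l, @EqR s n f l (Cn l).
Proof.
move=> H1 H2.
have E1 : forall a, @EqR s n f [:: z0 s; a] [:: a; z0 s] by move=> a; split=> // u v; apply: H1.
have E2 : forall a b, bad a b -> @EqR s n f [:: a; b] [:: z0 s; z0 s].
  by move=> a b hab; split=> // u v; apply: H2.
have bub : forall r, @EqR s n f (z0 s :: r) (r ++ [:: z0 s]).
  elim=> [|c r IH] //=.
  apply: (EqR_trans (l2 := c :: z0 s :: r)).
    by have := EqR_ctx [::] r (E1 c).
  exact: EqR_cons.
have bubj : forall r j, @EqR s n f (z0 s :: r ++ nseq j (z0 s)) (r ++ nseq j.+1 (z0 s)).
  move=> r j; have := EqR_catr (nseq j (z0 s)) (bub r).
  by rewrite -catA.
elim=> [|a l IH] //=.
apply: (EqR_trans (EqR_cons a IH)).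
rewrite /Cn /nz /=; rewrite -/(nz l).
case: ifP => na.
- rewrite /red /= -/(red (nz l)).
  have hsz := size_red (nz l).
  have hnz : (size (nz l) <= size l)%N by rewrite size_filter count_size.
  case E: (red (nz l)) => [|d r] /=.
    by rewrite subn0 subn1; apply: EqR_refl.
  case: ifP => hb.
  + rewrite E /= in hsz.
    apply: (EqR_trans (l2 := [:: z0 s, z0 s & r ++ nseq (size l - (size r).+1)%N (z0 s)])).
      by have := EqR_ctx [::] (r ++ nseq (size l - (size r).+1)%N (z0 s)) (E2 _ _ hb).
    apply: (EqR_trans (EqR_cons _ (bubj _ _))).
    have -> : ((size l).+1 - size r = (size l - (size r).+1).+2)%N by lia.
    have := bubj r (size l - (size r).+1)%N.+1.
    by [].
  + by rewrite /= subSS; apply: EqR_refl.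
- have na' : a = z0 s by apply/eqP; rewrite -spin_eq0; move/negbFE: na.
  rewrite na'.
  have hsz := size_red (nz l).
  have hnz : (size (nz l) <= size l)%N by rewrite size_filter count_size.
  have -> : ((size l).+1 - size (red (nz l)) = (size l - size (red (nz l))).+1)%N by lia.
  exact: bubj.
Qed.

Local Close Scope ring_scope.

Lemma sumb_card (T : finType) (P : pred T) : (\sum_(t : T) (P t : nat))%N = #|P|.
Proof.
rewrite -sum1_card [RHS]big_mkcond /=; apply: eq_bigr => t _; by rewrite unfold_in; case: (P t).
Qed.

Lemma sum_tuple_cons (T : finType) (k : nat) (F : k.+1.-tuple T -> nat) :
  (\sum_(t : k.+1.-tuple T) F t = \sum_(c : T) \sum_(t : k.-tuple T) F [tuple of c :: t])%N.
Proof.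
rewrite pair_big /=.
rewrite (reindex (fun p : T * k.-tuple T => [tuple of p.1 :: p.2])) //=.
exists (fun t : k.+1.-tuple T => (thead t, [tuple of behead t])).
  by move=> [c t] _ /=; congr (_, _); apply: val_inj.
by move=> t _; apply: val_inj => /=; rewrite [in RHS](tuple_eta t).
Qed.

Definition gk (s k : nat) : nat := (\sum_(t : k.-tuple 'I_(2 * s + 1)) (Pw' t : nat))%N.
Definition hneg (s : nat) (t : seq 'I_(2 * s + 1)) : bool :=
  if t is d :: _ then (spin d < 0)%R else false.
Definition hk (s k : nat) : nat :=
  (\sum_(t : k.-tuple 'I_(2 * s + 1)) (Pw' t && hneg t : nat))%N.

Lemma Pw_cons (s : nat) (c : 'I_(2 * s + 1)) t :
  Pw' (c :: t) = [&& nzb c, Pw' t & (if t is d :: _ then ~~ bad c d else true)].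
Proof.
rewrite /Pw' /=; case: t => [|d t] /=; first by rewrite !andbT.
rewrite /nbad; case: (nzb c); case: (nzb d); case: (all _ t); case: (bad c d); by case: (path _ d t).
Qed.

Lemma oppi_proof (s : nat) (c : 'I_(2 * s + 1)) : (2 * s - c < 2 * s + 1)%N.
Proof. have := ltn_ord c; lia. Qed.
Definition oppi (s : nat) (c : 'I_(2 * s + 1)) : 'I_(2 * s + 1) := Ordinal (oppi_proof c).
Lemma spin_oppi (s : nat) (c : 'I_(2 * s + 1)) : spin (oppi c) = (- spin c)%R.
Proof.
rewrite /spin /=; have := ltn_ord c => h.
rewrite -subzn; last by lia.
rewrite opprB; lia.
Qed.

Lemma spin_lt0 (s : nat) (c : 'I_(2 * s + 1)) : (spin c < 0)%R = (c < s)%N.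
Proof. by rewrite /spin subr_lt0 ltz_nat. Qed.
Lemma spin_gt0 (s : nat) (c : 'I_(2 * s + 1)) : (0 < spin c)%R = (s < c)%N.
Proof. by rewrite /spin subr_gt0 ltz_nat. Qed.

Lemma count_neg (s : nat) : (\sum_(c : 'I_(2 * s + 1)) (spin c < 0)%R : nat)%N = s.
Proof.
under eq_bigr do rewrite spin_lt0.
rewrite -(big_mkord xpredT (fun i => (i < s : nat)%N)).
rewrite (big_cat_nat _ (n := s)) //=; last by lia.
rewrite [X in (X + _)%N](eq_big_nat _ _ (F2 := fun=> 1%N)); last by move=> i /andP[_ ->].
rewrite [X in (_ + X)%N](eq_big_nat _ _ (F2 := fun=> 0%N)); last first.
  by move=> i /andP[h _]; rewrite ltnNge h.
by rewrite !sum_nat_const_nat muln0 muln1 addn0 subn0.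
Qed.

Lemma count_nz (s : nat) : (\sum_(c : 'I_(2 * s + 1)) (nzb c : nat))%N = (2 * s)%N.
Proof.
rewrite sumb_card.
have -> : #|@nzb s| = #|predC1 (z0 s)|.
  by apply: eq_card => c; rewrite !inE unfold_in /nzb spin_eq0.
by rewrite cardC1 card_ord addn1.
Qed.

Lemma count_bad (s : nat) (d : 'I_(2 * s + 1)) :
  (\sum_(c : 'I_(2 * s + 1)) (nzb c && ~~ bad c d : nat) + (spin d < 0)%R = 2 * s)%N.
Proof.
have e : forall c, (nzb c && ~~ bad c d : nat) = (nzb c : nat) - (bad c d : nat).
  move=> c; case hb: (bad c d); last by rewrite andbT subn0.
  by have [-> _] := bad_nz hb.
have hle : forall c, ((bad c d : nat) <= nzb c)%N.
  by move=> c; case hb: (bad c d) => //; have [-> _] := bad_nz hb.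
have hsum : (\sum_(c : 'I_(2 * s + 1)) (bad c d : nat))%N = (spin d < 0)%R.
  case: ltP => hd.
  - rewrite (bigD1 (oppi d)) //= big1 ?addn0.
      by rewrite /bad spin_oppi oppr_gt0 hd opprK eqxx.
    move=> c hc; apply/eqP; rewrite eqb0 /bad; apply/negP => /andP[_ /eqP h].
    move/negP: hc; apply; apply/eqP; apply/eqP; rewrite -spin_inj spin_oppi h opprK //.
  - rewrite big1 // => c _; apply/eqP; rewrite eqb0 /bad; apply/negP => /andP[h /eqP h2].
    by move: hd; rewrite h2 oppr_ge0 leNgt h.
under eq_bigr do rewrite e.
rewrite -hsum -[in RHS]count_nz -big_split /=.
by apply: eq_bigr => c _; rewrite subnK.
Qed.

Lemma gk0 (s : nat) : gk s 0 = 1%N.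
Proof.
rewrite /gk (eq_bigr (fun _ => 1%N)); last by move=> t _; rewrite tuple0.
by rewrite sum_nat_const card_tuple expn0.
Qed.

Lemma inner_count (s : nat) (t : seq 'I_(2 * s + 1)) :
  (\sum_(c : 'I_(2 * s + 1)) (nzb c && (if t is d :: _ then ~~ bad c d else true) : nat)
     + hneg t = 2 * s)%N.
Proof.
case: t => [|d t] /=.
  by rewrite addn0 -[in RHS]count_nz; apply: eq_bigr => c _; rewrite andbT.
exact: count_bad.
Qed.

Lemma gk_rec1 (s k : nat) : (gk s k.+1 + hk s k = 2 * s * gk s k)%N.
Proof.
rewrite /gk /hk sum_tuple_cons exchange_big /= -big_split /= big_distrr /=.
apply: eq_bigr => t _.
under eq_bigr do rewrite Pw_cons.
case: (Pw' t) => /=; last by rewrite big1 ?muln0 // => c _; rewrite andbF.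
rewrite muln1 -[in RHS](inner_count t); congr (_ + _)%N.
Qed.

Lemma gk_rec2 (s k : nat) : hk s k.+1 = (s * gk s k)%N.
Proof.
have -> : (s * gk s k = (\sum_(c : 'I_(2 * s + 1)) ((spin c < 0)%R : nat)) * gk s k)%N.
  by rewrite count_neg.
rewrite /hk /gk sum_tuple_cons big_distrl /=.
apply: eq_bigr => c _; rewrite big_distrr /=; apply: eq_bigr => t _.
rewrite Pw_cons /=.
case hc: (spin c < 0)%R; last by rewrite andbF mul0n.
have nc : nzb c by rewrite /nzb lt_eqF.
have nb : forall d, ~~ bad c d by move=> d; rewrite /bad ltNge ltW.
rewrite nc mul1n andbT /=; case: t => [[|d t] /= _] /= //.
by rewrite nb andbT.
Qed.

Lemma gk1 (s : nat) : gk s 1 = (2 * s)%N.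
Proof. by have := gk_rec1 s 0; rewrite gk0 muln1 /hk big1 ?addn0 // => t _; rewrite tuple0 andbF. Qed.

Lemma gk_rec (s k : nat) : (gk s k.+2 + s * gk s k = 2 * s * gk s k.+1)%N.
Proof. by rewrite -gk_rec2 gk_rec1. Qed.

Lemma Tset_mem (s k : nat) (t : k.-tuple 'I_(2 * s + 1)) :
  ([ffun i => tnth t i] \in Tset s k) = Pw' t.
Proof.
rewrite /Tset inE /Pw'; congr andb.
  apply/forallP/all_tnthP => h i; have := h i; by rewrite ?ffunE.
apply/forallP/(sortedP (z0 s)) => h.
- move=> i hi; rewrite size_tuple in hi.
  have hi' : (i < k)%N by lia.
  have := h (Ordinal hi'); move/forallP/(_ (Ordinal hi))/implyP => /=; rewrite eqxx.
  by rewrite !ffunE !(tnth_nth (z0 s)) /=; move=> H; apply: H.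
- move=> j; apply/forallP => j'; apply/implyP => /eqP hj.
  rewrite !ffunE !(tnth_nth (z0 s)) hj; apply: h.
  by rewrite size_tuple -hj.
Qed.

Lemma card_Tset (s k : nat) : #|Tset s k| = gk s k.
Proof.
rewrite -sum1_card /gk sumb_card -sum1_card.
rewrite (reindex (fun t : k.-tuple 'I_(2 * s + 1) => [ffun i => tnth t i])) /=.
  by apply: eq_bigl => t; rewrite Tset_mem.
exists (fun f : {ffun 'I_k -> 'I_(2 * s + 1)} => mktuple f).
  by move=> t _; apply: eq_from_tnth => i; rewrite tnth_mktuple ffunE.
by move=> f _; apply/ffunP => i; rewrite !ffunE tnth_mktuple.
Qed.


Definition lx (s n : nat) (x : conf s n) : seq 'I_(2 * s + 1) := [seq x i | i <- enum 'I_n].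
Definition conf_of (s n : nat) (l : seq 'I_(2 * s + 1)) : conf s n :=
  [ffun i : 'I_n => nth (z0 s) l i].
Definition updn (s n : nat) (x : conf s n) (p : nat) (c d : 'I_(2 * s + 1)) : conf s n :=
  [ffun i : 'I_n => if (i : nat) == p then c else if (i : nat) == p.+1 then d else x i].
Definition nf (s n : nat) (x : conf s n) := red (nz (lx x)).
Definition canon (s n : nat) (x : conf s n) : bool := lx x == Cn (lx x).

Lemma size_lx s n (x : conf s n) : size (lx x) = n.
Proof. by rewrite /lx size_map size_enum_ord. Qed.

Lemma nth_lx s n (x : conf s n) (i : 'I_n) : nth (z0 s) (lx x) i = x i.
Proof. by rewrite /lx (nth_map i) ?size_enum_ord // nth_ord_enum. Qed.

Lemma conf_ofK s n (x : conf s n) : conf_of n (lx x) = x.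
Proof. by apply/ffunP => i; rewrite ffunE nth_lx. Qed.

Lemma lx_conf_of s n (l : seq 'I_(2 * s + 1)) : size l = n -> lx (conf_of n l) = l.
Proof.
move=> hl; apply: (@eq_from_nth _ (z0 s)); first by rewrite size_lx.
move=> i; rewrite size_lx => hi.
by rewrite (nth_lx _ (Ordinal hi)) ffunE.
Qed.

Lemma lx_inj s n : injective (@lx s n).
Proof. by move=> x y h; rewrite -(conf_ofK x) h conf_ofK. Qed.

Lemma split2 (T : Type) (z : T) (l : seq T) p : (p.+1 < size l)%N ->
  l = take p l ++ [:: nth z l p; nth z l p.+1] ++ drop p.+2 l.
Proof.
move=> h; rewrite -[LHS](cat_take_drop p); congr (_ ++ _).
rewrite (drop_nth z) ?(drop_nth z (n := p.+1)) //=; lia.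
Qed.

Lemma conf_of_cat s n (u v : seq 'I_(2 * s + 1)) a b c d :
  size (u ++ [:: a; b] ++ v) = n ->
  conf_of n (u ++ [:: c; d] ++ v) = updn (conf_of n (u ++ [:: a; b] ++ v)) (size u) c d.
Proof.
move=> hs; apply/ffunP => i; rewrite !ffunE !nth_cat.
case: ltnP => h1.
  by rewrite (ltn_eqF h1) (_ : ((i : nat) == (size u).+1) = false) //; apply/negbTE; lia.
case: eqP => h2; first by rewrite h2 subnn.
case: eqP => h3; first by rewrite h3 subSn // subnn.
have -> : (i - size u = (i - size u - 2).+2)%N by lia.
by [].
Qed.

Lemma lx_updn s n (x : conf s n) p c d : (p.+1 < n)%N ->
  lx (updn x p c d) = take p (lx x) ++ [:: c; d] ++ drop p.+2 (lx x).
Proof.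
move=> hp.
have hs : (p.+1 < size (lx x))%N by rewrite size_lx.
have e := split2 (z0 s) hs.
have hsz : size (take p (lx x) ++ [:: nth (z0 s) (lx x) p; nth (z0 s) (lx x) p.+1] ++ drop p.+2 (lx x)) = n.
  by rewrite -e size_lx.
have hu : size (take p (lx x)) = p by rewrite size_takel // size_lx; lia.
have := conf_of_cat c d hsz; rewrite -e conf_ofK hu => <-.
rewrite lx_conf_of //; move: hsz; rewrite !size_cat /=; by [].
Qed.

Lemma red_cat s (p q : seq 'I_(2 * s + 1)) : red (p ++ q) = foldr (@stepr s) (red q) p.
Proof. by rewrite /red foldr_cat. Qed.

Lemma nzb_z0 s : nzb (z0 s) = false.
Proof. by rewrite /nzb spin_z0 eqxx. Qed.

Lemma nf_swap s n (x : conf s n) p a : (p.+1 < n)%N ->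
  nf (updn x p (z0 s) a) = nf (updn x p a (z0 s)).
Proof. by move=> hp; rewrite /nf !lx_updn // /nz !filter_cat /= nzb_z0. Qed.

Lemma nf_bad s n (x : conf s n) p a b : (p.+1 < n)%N -> bad a b ->
  nf (updn x p a b) = nf (updn x p (z0 s) (z0 s)).
Proof.
move=> hp hab; have [na nb] := bad_nz hab.
rewrite /nf !lx_updn // /nz !filter_cat /= nzb_z0 na nb /=.
by rewrite !red_cat (red_cancel _ hab).
Qed.

Lemma nz_Cn s (l : seq 'I_(2 * s + 1)) : nz (Cn l) = red (nz l).
Proof.
rewrite /Cn /nz filter_cat filter_nseq nzb_z0 mul0n cats0.
apply: nz_id; have /andP[] := red_P (filter_all (@nzb s) l); by [].
Qed.

Definition can (s n : nat) (x : conf s n) : conf s n := conf_of n (Cn (lx x)).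

Lemma lx_can s n (x : conf s n) : lx (can x) = Cn (lx x).
Proof. by rewrite lx_conf_of // size_Cn size_lx. Qed.

Lemma nf_can s n (x : conf s n) : nf (can x) = nf x.
Proof.
rewrite /nf lx_can nz_Cn red_id //; exact: red_P (filter_all _ _).
Qed.

Lemma Cn_lx s n (x : conf s n) : Cn (lx x) = nf x ++ nseq (n - size (nf x)) (z0 s).
Proof. by rewrite /Cn size_lx. Qed.

Lemma canon_can s n (x : conf s n) : canon (can x).
Proof. by rewrite /canon Cn_lx nf_can lx_can Cn_lx. Qed.

Lemma canon_eq s n (x y : conf s n) : canon x -> canon y -> nf x = nf y -> x = y.
Proof.
rewrite /canon => /eqP hx /eqP hy e; apply: lx_inj.
by rewrite hx hy !Cn_lx e.
Qed.

Lemma P_nf s n (x : conf s n) : Pw' (nf x).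
Proof. exact: red_P (filter_all _ _). Qed.

Lemma size_nf s n (x : conf s n) : (size (nf x) <= n)%N.
Proof.
rewrite /nf; apply: (leq_trans (size_red _)); rewrite size_filter -[X in (_ <= X)%N](size_lx x); exact: count_size.
Qed.

Lemma take_mktuple (T : Type) (z : T) (l : seq T) k : (k <= size l)%N ->
  map (fun i : 'I_k => nth z l i) (enum 'I_k) = take k l.
Proof.
move=> hk; apply: (@eq_from_nth _ z).
  by rewrite size_map size_enum_ord size_takel.
move=> i; rewrite size_map size_enum_ord => hi.
by rewrite (nth_map (Ordinal hi)) ?size_enum_ord // nth_enum_ord // nth_take.
Qed.

Lemma canon_k s n k : (k <= n)%N ->
  gk s k = (\sum_(x : conf s n) (canon x && (size (nf x) == k)) : nat)%N.
Proof.
move=> hk.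
rewrite /gk !sumb_card -!sum1_card.
pose h := fun t : k.-tuple 'I_(2 * s + 1) => conf_of n (val t ++ nseq (n - k) (z0 s)).
pose h' := fun x : conf s n => [tuple nth (z0 s) (lx x) i | i < k].
have lxh : forall t : k.-tuple 'I_(2 * s + 1), lx (h t) = val t ++ nseq (n - k) (z0 s).
  by move=> t; rewrite lx_conf_of // size_cat size_tuple size_nseq; lia.
rewrite (reindex_onto h h') /=.
  apply: eq_bigl => t; rewrite !unfold_in /=.
  have -> : h' (h t) == t.
    apply/eqP; apply: val_inj; rewrite /= take_mktuple lxh; last by rewrite size_cat size_tuple; lia.
    by rewrite take_size_cat ?size_tuple.
  rewrite andbT.
  have nzh : nz (lx (h t)) = nz t.
    by rewrite lxh /nz filter_cat filter_nseq nzb_z0 mul0n cats0.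
  apply/idP/idP.
  - move=> hP; have ht : nf (h t) = t by rewrite /nf nzh nz_id ?red_id //; case/andP: hP.
    by rewrite /canon Cn_lx ht lxh size_tuple !eqxx.
  - move=> /andP[/eqP hc /eqP hs].
    move: hc; rewrite Cn_lx hs lxh => /eqP; rewrite eqseq_cat ?size_tuple ?hs // => /andP[/eqP -> _].
    exact: P_nf.
move=> x; rewrite unfold_in /= => /andP[/eqP hc /eqP hs].
apply: lx_inj; rewrite lxh /= take_mktuple ?size_lx //.
by rewrite hc Cn_lx hs take_size_cat.
Qed.

Lemma count_canon s n :
  (\sum_(x : conf s n) (canon x : nat))%N = (\sum_(k < n.+1) gk s k)%N.
Proof.
rewrite (eq_bigr (fun k : 'I_n.+1 => \sum_(x : conf s n) (canon x && (size (nf x) == k)) : nat)%N); last first.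
  by move=> k _; apply: canon_k; rewrite -ltnS.
rewrite exchange_big /=; apply: eq_bigr => x _.
have hx : (size (nf x) < n.+1)%N by rewrite ltnS size_nf.
rewrite (bigD1 (Ordinal hx)) //= eqxx andbT big1 ?addn0 // => k hk.
case: (canon x) => //=; apply/eqP; rewrite eqb0; apply/eqP => e.
by move/eqP: hk; apply; apply: val_inj; rewrite /= e.
Qed.

Local Open Scope ring_scope.


Definition agree (s n : nat) (x y : conf s n) (k k' : 'I_n) : bool :=
  [forall l : 'I_n, ((l != k) && (l != k')) ==> (x l == y l)].

Lemma updn_k s n (x : conf s n) (k : 'I_n) c d : updn x k c d k = c.
Proof. by rewrite ffunE eqxx. Qed.

Lemma updn_k' s n (x : conf s n) (k k' : 'I_n) c d : (k' : nat) = k.+1 -> updn x k c d k' = d.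
Proof. by move=> h; rewrite ffunE h eqxx (_ : (k.+1 == k) = false) //; lia. Qed.

Lemma updn_updn s n (x : conf s n) (p : nat) c d c' d' : updn (updn x p c d) p c' d' = updn x p c' d'.
Proof. apply/ffunP => i; rewrite !ffunE; by case: ((i : nat) == p); case: ((i : nat) == p.+1). Qed.

Lemma updn_eq s n (x y : conf s n) (k k' : 'I_n) (hk : (k' : nat) = k.+1) c d :
  (y == updn x k c d) = [&& agree x y k k', y k == c & y k' == d].
Proof.
apply/eqP/and3P.
  move=> ->; rewrite updn_k (updn_k' _ _ _ hk); split=> //.
  apply/forallP => l; apply/implyP => /andP[h1 h2].
  rewrite ffunE (_ : ((l : nat) == k) = false); last by apply/negbTE; move: h1; apply: contra => /eqP h; apply/eqP/val_inj.
  rewrite (_ : ((l : nat) == k.+1) = false) //; apply/negbTE; move: h2; apply: contra => /eqP h.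
  by apply/eqP/val_inj; rewrite /= h hk.
move=> [/forallP ha /eqP hc /eqP hd]; apply/ffunP => l; rewrite ffunE.
case: eqP => h1; first by rewrite -hc; congr (y _); apply: val_inj.
case: eqP => h2; first by rewrite -hd; congr (y _); apply: val_inj; rewrite /= h2 hk.
have := ha l; rewrite (_ : l != k); last by apply/eqP => e; apply: h1; rewrite e.
rewrite (_ : l != k') //=; last by apply/eqP => e; apply: h2; rewrite e hk.
by move/eqP.
Qed.

Lemma L1 s n (x : conf s n) (k k' : 'I_n) (hk : (k' : nat) = k.+1) (G : conf s n -> algC) :
  \sum_(y : conf s n) (agree x y k k')%:R * G y =
  \sum_(c : 'I_(2 * s + 1)) \sum_(d : 'I_(2 * s + 1)) G (updn x k c d).
Proof.
have e : forall c d, G (updn x k c d) = \sum_(y : conf s n) (y == updn x k c d)%:R * G y.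
  move=> c d; rewrite (bigD1 (updn x k c d)) //= eqxx mul1r big1 ?addr0 // => y /negbTE ->.
  by rewrite mul0r.
rewrite [RHS](eq_bigr (fun c => \sum_(d : 'I_(2 * s + 1)) \sum_(y : conf s n) (y == updn x k c d)%:R * G y)); last first.
  by move=> c _; apply: eq_bigr => d _; apply: e.
under [RHS]eq_bigr do rewrite exchange_big /=.
rewrite [RHS]exchange_big /=; apply: eq_bigr => y _.
under eq_bigr do under eq_bigr do rewrite (updn_eq _ _ hk).
case ha: (agree x y k k') => /=; last first.
  by rewrite mul0r big1 // => c _; rewrite big1 // => d _; rewrite mul0r.
rewrite (bigD1 (y k)) //= [X in _ + X]big1 ?addr0 => [|c hc]; last first.
  by rewrite big1 // => d _; rewrite eq_sym (negbTE hc) mul0r.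
rewrite (bigD1 (y k')) //= !eqxx [X in _ + X]big1 ?addr0 // => d hd.
by rewrite eq_sym (negbTE hd) andbF mul0r.
Qed.

Lemma agree_refl s n (x : conf s n) k k' : agree x x k k'.
Proof. by apply/forallP => l; rewrite eqxx implybT. Qed.

Lemma L2 s n (k k' : 'I_n) (hk : (k' : nat) = k.+1) (G : conf s n -> algC) :
  \sum_(x : conf s n) G x =
  \sum_(x : conf s n) ((x k == z0 s) && (x k' == z0 s))%:R *
     \sum_(c : 'I_(2 * s + 1)) \sum_(d : 'I_(2 * s + 1)) G (updn x k c d).
Proof.
have step : forall c d, \sum_(x : conf s n) ((x k == z0 s) && (x k' == z0 s))%:R * G (updn x k c d)
   = \sum_(y : conf s n) ((y k == c) && (y k' == d))%:R * G y.
  move=> c d.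
  rewrite [RHS](eq_bigr (fun y : conf s n => if (y k == c) && (y k' == d) then G y else 0)); last first.
    by move=> y _; case: ifP; rewrite ?mul1r ?mul0r.
  rewrite -big_mkcond /=.
  rewrite [RHS](reindex_onto (fun x => updn x k c d) (fun y => updn y k (z0 s) (z0 s))) /=; last first.
    move=> y /andP[/eqP h1 /eqP h2]; rewrite updn_updn; apply/esym/eqP.
    by rewrite (updn_eq _ _ hk) agree_refl h1 h2 !eqxx.
  rewrite [RHS]big_mkcond /=; apply: eq_bigr => x _.
  rewrite updn_k (updn_k' _ _ _ hk) !eqxx /= updn_updn [updn _ _ _ _ == x]eq_sym (updn_eq _ _ hk) agree_refl /=.
  by case: ifP; rewrite ?mul1r ?mul0r.
under [RHS]eq_bigr do rewrite mulr_sumr.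
under [RHS]eq_bigr do under eq_bigr do rewrite mulr_sumr.
rewrite [RHS]exchange_big /=.
under [RHS]eq_bigr do rewrite exchange_big /=.
under [RHS]eq_bigr do under eq_bigr do rewrite step.
under [RHS]eq_bigr do rewrite exchange_big /=.
rewrite [RHS]exchange_big /=; apply: eq_bigr => y _.
under eq_bigr do rewrite -mulr_suml.
rewrite -mulr_suml.
rewrite (bigD1 (y k)) //= [X in _ + X]big1 ?addr0 => [|c hc]; last first.
  by rewrite big1 ?mul0r // => d _; rewrite eq_sym (negbTE hc).
rewrite (bigD1 (y k')) //= !eqxx [X in _ + X]big1 ?addr0 ?mul1r // => d hd.
by rewrite eq_sym (negbTE hd) andbF.
Qed.

Definition r2 : algC := (sqrtC 2)^-1.

Lemma r2_conj : r2^* = r2.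
Proof.
rewrite /r2; apply/CrealP; rewrite rpredV; apply: sqrtC_real; exact: ler0n.
Qed.

Lemma r2_neq0 : r2 != 0.
Proof. by rewrite /r2 invr_eq0 sqrtC_eq0 pnatr_eq0. Qed.

Lemma conj_nat_b (b : bool) : ((b : nat)%:R : algC)^* = (b : nat)%:R.
Proof. by rewrite conjC_nat. Qed.

Lemma phiv_conj m a b : (phiv m a b)^* = phiv m a b.
Proof. by rewrite /phiv rmorphM rmorphB /= !conjC_nat r2_conj. Qed.

Lemma chiv_conj m a b : (chiv m a b)^* = chiv m a b.
Proof. by rewrite /chiv rmorphM rmorphB /= !conjC_nat r2_conj. Qed.

Lemma sum2_pick s (F : 'I_(2 * s + 1) -> 'I_(2 * s + 1) -> algC) a b :
  \sum_(c : 'I_(2 * s + 1)) \sum_(d : 'I_(2 * s + 1)) ((c == a) && (d == b))%:R * F c d = F a b.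
Proof.
rewrite (bigD1 a) //= [X in _ + X]big1 ?addr0 => [|c /negbTE hc]; last first.
  by rewrite big1 // => d _; rewrite hc mul0r.
rewrite (bigD1 b) //= !eqxx mul1r [X in _ + X]big1 ?addr0 // => d /negbTE hd.
by rewrite hd andbF mul0r.
Qed.

Lemma pj_proof (s : nat) (j : 'I_s) : (s + j.+1 < 2 * s + 1)%N.
Proof. have := ltn_ord j; lia. Qed.
Definition pj (s : nat) (j : 'I_s) : 'I_(2 * s + 1) := Ordinal (pj_proof j).

Lemma spin_pj s (j : 'I_s) : spin (pj j) = (j.+1)%:Z.
Proof. rewrite /spin /=; lia. Qed.

Lemma bad_pj s (j : 'I_s) : bad (pj j) (oppi (pj j)).
Proof. by rewrite /bad spin_oppi spin_pj eqxx andbT. Qed.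

Lemma bad_inv s (a b : 'I_(2 * s + 1)) : bad a b -> exists j : 'I_s, a = pj j /\ b = oppi (pj j).
Proof.
move=> hab; move: (hab); rewrite /bad spin_gt0 => /andP[ha /eqP hb].
have hj : (a - s - 1 < s)%N by have := ltn_ord a; lia.
have ea : a = pj (Ordinal hj) by apply: val_inj => /=; lia.
exists (Ordinal hj); split=> //.
by apply/eqP; rewrite -spin_inj spin_oppi -ea hb.
Qed.

Lemma phi_sum s (i : 'I_(2 * s + 1)) (F : 'I_(2 * s + 1) -> 'I_(2 * s + 1) -> algC) :
  \sum_(c : 'I_(2 * s + 1)) \sum_(d : 'I_(2 * s + 1)) (phiv (spin i) (spin c) (spin d))^* * F c d
  = r2 * (F (z0 s) i - F i (z0 s)).
Proof.
under eq_bigr do under eq_bigr do rewrite phiv_conj /phiv -/r2 !spin_eq0 !spin_inj -mulrA mulrBl.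
under eq_bigr do rewrite -mulr_sumr sumrB.
rewrite -mulr_sumr sumrB; congr (_ * _).
by rewrite sum2_pick (eq_bigr (fun c => \sum_d ((c == i) && (d == z0 s))%:R * F c d)) ?sum2_pick.
Qed.

Lemma chi_sum s (j : 'I_s) (F : 'I_(2 * s + 1) -> 'I_(2 * s + 1) -> algC) :
  \sum_(c : 'I_(2 * s + 1)) \sum_(d : 'I_(2 * s + 1)) (chiv (j.+1)%:Z (spin c) (spin d))^* * F c d
  = r2 * (F (z0 s) (z0 s) - F (pj j) (oppi (pj j))).
Proof.
have e1 : (j.+1)%:Z = spin (pj j) by rewrite spin_pj.
have e2 : (- (j.+1)%:Z)%R = spin (oppi (pj j)) by rewrite spin_oppi spin_pj.
under eq_bigr do under eq_bigr do rewrite chiv_conj /chiv -/r2 e2 e1 !spin_eq0 !spin_inj -mulrA mulrBl.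
under eq_bigr do rewrite -mulr_sumr sumrB.
rewrite -mulr_sumr sumrB; congr (_ * _).
by rewrite sum2_pick (eq_bigr (fun c => \sum_d ((c == pj j) && (d == oppi (pj j)))%:R * F c d)) ?sum2_pick.
Qed.

Lemma H_apply s n (x : conf s n) (k k' : 'I_n) (hk : (k' : nat) = k.+1) (F : conf s n -> algC) :
  \sum_(y : conf s n) (agree x y k k')%:R *
      hloc s (spin (x k)) (spin (x k')) (spin (y k)) (spin (y k')) * F y
  = \sum_(i : 'I_(2 * s + 1) | spin i != 0) phiv (spin i) (spin (x k)) (spin (x k')) *
        (r2 * (F (updn x k (z0 s) i) - F (updn x k i (z0 s))))
  + \sum_(j < s) chiv (j.+1)%:Z (spin (x k)) (spin (x k')) *
        (r2 * (F (updn x k (z0 s) (z0 s)) - F (updn x k (pj j) (oppi (pj j))))).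
Proof.
under eq_bigr do rewrite -mulrA.
rewrite (L1 x hk (fun y => hloc s (spin (x k)) (spin (x k')) (spin (y k)) (spin (y k')) * F y)).
under eq_bigr do under eq_bigr do rewrite updn_k (updn_k' _ _ _ hk).
under [X in _ = X + _]eq_bigr => i _ do rewrite -(phi_sum i (fun c d => F (updn x k c d))) mulr_sumr.
under [X in _ = _ + X]eq_bigr => j _ do rewrite -(chi_sum j (fun c d => F (updn x k c d))) mulr_sumr.
rewrite [X in _ = X + _]exchange_big [X in _ = _ + X]exchange_big -big_split /=.
apply: eq_bigr => c _.
under [X in _ = X + _]eq_bigr do rewrite mulr_sumr.
under [X in _ = _ + X]eq_bigr do rewrite mulr_sumr.
rewrite [X in _ = X + _]exchange_big [X in _ = _ + X]exchange_big -big_split /=.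
apply: eq_bigr => d _.
rewrite /hloc mulrDl !mulr_suml; congr (_ + _); apply: eq_bigr => i _; by rewrite mulrA.
Qed.

Definition Tk s n (F : conf s n -> algC) (x : conf s n) (k k' : 'I_n) : algC :=
  \sum_(i : 'I_(2 * s + 1) | spin i != 0) phiv (spin i) (spin (x k)) (spin (x k')) *
        (r2 * (F (updn x k (z0 s) i) - F (updn x k i (z0 s))))
  + \sum_(j < s) chiv (j.+1)%:Z (spin (x k)) (spin (x k')) *
        (r2 * (F (updn x k (z0 s) (z0 s)) - F (updn x k (pj j) (oppi (pj j))))).

Lemma Hsum s n (x : conf s n) (F : conf s n -> algC) :
  \sum_(y : conf s n) Hentry x y * F y =
  \sum_(k : 'I_n) \sum_(k' : 'I_n | (k' : nat) == k.+1) Tk F x k k'.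
Proof.
rewrite /Hentry.
under eq_bigr do rewrite mulr_suml.
under eq_bigr do under eq_bigr do rewrite mulr_suml.
rewrite exchange_big /=; apply: eq_bigr => k _.
rewrite exchange_big /=; apply: eq_bigr => k' /eqP hk.
by rewrite /Tk -(H_apply x hk F).
Qed.

Lemma ker_of_inv s n (F : conf s n -> algC) :
  (forall x p a, (p.+1 < n)%N -> F (updn x p (z0 s) a) = F (updn x p a (z0 s))) ->
  (forall x p a b, (p.+1 < n)%N -> bad a b -> F (updn x p a b) = F (updn x p (z0 s) (z0 s))) ->
  forall x, \sum_(y : conf s n) Hentry x y * F y = 0.
Proof.
move=> H1 H2 x; rewrite Hsum big1 // => k _; rewrite big1 // => k' /eqP hk.
have hp : (k.+1 < n)%N by rewrite -hk.
rewrite /Tk big1 ?add0r => [|i _]; last by rewrite H1 // subrr mulr0 mulr0.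
by rewrite big1 // => j _; rewrite (H2 _ _ _ _ hp (bad_pj j)) subrr mulr0 mulr0.
Qed.

Lemma quad s n (k k' : 'I_n) (hk : (k' : nat) = k.+1) (F : conf s n -> algC)
   (v : 'I_(2 * s + 1) -> 'I_(2 * s + 1) -> algC) :
  let D := fun x : conf s n => \sum_(c : 'I_(2 * s + 1)) \sum_(d : 'I_(2 * s + 1)) (v c d)^* * F (updn x k c d) in
  \sum_(x : conf s n) (F x)^* * (v (x k) (x k') * D x) =
  \sum_(x : conf s n) ((x k == z0 s) && (x k' == z0 s))%:R * (D x * (D x)^*).
Proof.
move=> D.
rewrite (L2 hk); apply: eq_bigr => x _; congr (_ * _).
have eD : forall c d, D (updn x k c d) = D x.
  by move=> c d; rewrite /D; apply: eq_bigr => c' _; apply: eq_bigr => d' _; rewrite updn_updn.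
have rr : forall a b : algC, a * (b * D x) = D x * (b * a) by move=> a b; ring.
under eq_bigr do under eq_bigr do rewrite updn_k (updn_k' _ _ _ hk) eD rr.
under eq_bigr do rewrite -mulr_sumr.
rewrite -mulr_sumr; congr (_ * _).
rewrite /D rmorph_sum /=; apply: eq_bigr => c _; rewrite rmorph_sum /=; apply: eq_bigr => d _.
by rewrite rmorphM /= conjCK mulrC.
Qed.

Lemma inv_of_ker s n (F : conf s n -> algC) :
  (forall x, \sum_(y : conf s n) Hentry x y * F y = 0) ->
  (forall x p a, (p.+1 < n)%N -> F (updn x p (z0 s) a) = F (updn x p a (z0 s))) /\
  (forall x p a b, (p.+1 < n)%N -> bad a b -> F (updn x p a b) = F (updn x p (z0 s) (z0 s))).
Proof.
move=> HK.
pose Dphi (k : 'I_n) (i : 'I_(2 * s + 1)) (x : conf s n) :=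
  \sum_(c : 'I_(2 * s + 1)) \sum_(d : 'I_(2 * s + 1))
     (phiv (spin i) (spin c) (spin d))^* * F (updn x k c d).
pose Dchi (k : 'I_n) (j : 'I_s) (x : conf s n) :=
  \sum_(c : 'I_(2 * s + 1)) \sum_(d : 'I_(2 * s + 1))
     (chiv (j.+1)%:Z (spin c) (spin d))^* * F (updn x k c d).
pose Z (k k' : 'I_n) (x : conf s n) : algC := ((x k == z0 s) && (x k' == z0 s))%:R.
pose W (k k' : 'I_n) :=
  \sum_(i : 'I_(2 * s + 1) | spin i != 0) \sum_(x : conf s n) Z k k' x * (Dphi k i x * (Dphi k i x)^*)
  + \sum_(j < s) \sum_(x : conf s n) Z k k' x * (Dchi k j x * (Dchi k j x)^*).
have Wge0 : forall k k', 0 <= W k k'.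
  move=> k k'; apply: addr_ge0; apply: sumr_ge0 => i _; apply: sumr_ge0 => x _;
    apply: mulr_ge0; rewrite ?ler0n ?mul_conjC_ge0 //.
have Q : \sum_(k : 'I_n) \sum_(k' : 'I_n | (k' : nat) == k.+1) W k k' = 0.
  transitivity (\sum_(x : conf s n) (F x)^* * \sum_(y : conf s n) Hentry x y * F y); last first.
    by rewrite big1 // => x _; rewrite HK mulr0.
  under [RHS]eq_bigr do rewrite Hsum mulr_sumr.
  rewrite [RHS]exchange_big /=; apply: eq_bigr => k _.
  under [RHS]eq_bigr do rewrite mulr_sumr.
  rewrite [RHS]exchange_big /=; apply: eq_bigr => k' /eqP hk.
  rewrite /W /Tk.
  under [RHS]eq_bigr => x _.
    rewrite mulrDr mulr_sumr mulr_sumr.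
    under eq_bigr => i _ do rewrite -(phi_sum i (fun c d => F (updn x k c d))) -/(Dphi k i x).
    under [X in _ + X]eq_bigr => j _ do rewrite -(chi_sum j (fun c d => F (updn x k c d))) -/(Dchi k j x).
    over.
  rewrite big_split /= [X in _ = X + _]exchange_big [X in _ = _ + X]exchange_big /=.
  congr (_ + _); apply: eq_bigr => i _.
  - by rewrite (quad hk F (fun c d => phiv (spin i) (spin c) (spin d))).
  - by rewrite (quad hk F (fun c d => chiv (i.+1)%:Z (spin c) (spin d))).
have Wk0 : forall (k k' : 'I_n), (k' : nat) = k.+1 -> W k k' = 0.
  move=> k k' hk.
  have h1 := @psumr_eq0P _ _ _ _ (fun k _ => sumr_ge0 _ (fun k' _ => Wge0 k k')) Q k isT.
  by apply: (psumr_eq0P (fun k' _ => Wge0 k k') h1); apply/eqP.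
have pos1 : forall k k' i, 0 <= \sum_(x : conf s n) Z k k' x * (Dphi k i x * (Dphi k i x)^*).
  by move=> k k' i; apply: sumr_ge0 => x _; rewrite mulr_ge0 ?ler0n ?mul_conjC_ge0.
have pos2 : forall k k' j, 0 <= \sum_(x : conf s n) Z k k' x * (Dchi k j x * (Dchi k j x)^*).
  by move=> k k' j; apply: sumr_ge0 => x _; rewrite mulr_ge0 ?ler0n ?mul_conjC_ge0.
have pos3 : forall k k' D (x : conf s n), 0 <= Z k k' x * (D * D^*).
  by move=> k k' D x; rewrite mulr_ge0 ?ler0n ?mul_conjC_ge0.
have zeroD : forall k k' (D : conf s n -> algC),
   \sum_(x : conf s n) Z k k' x * (D x * (D x)^*) = 0 ->
   forall x : conf s n, x k = z0 s -> x k' = z0 s -> D x = 0.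
  move=> k k' D hs x h1 h2.
  have := @psumr_eq0P _ _ _ _ (fun (x : conf s n) _ => pos3 k k' (D x) x) hs x isT.
  rewrite /Z h1 h2 !eqxx mul1r => /eqP; rewrite mul_conjC_eq0; by move/eqP.
have W0 : forall (k k' : 'I_n), (k' : nat) = k.+1 ->
   (forall i, spin i != 0 -> forall x : conf s n, x k = z0 s -> x k' = z0 s -> Dphi k i x = 0) /\
   (forall j (x : conf s n), x k = z0 s -> x k' = z0 s -> Dchi k j x = 0).
  move=> k k' hk; have := Wk0 k k' hk; rewrite /W => /eqP.
  rewrite paddr_eq0; last 2 first.
  - by apply: sumr_ge0 => i _; apply: pos1.
  - by apply: sumr_ge0 => i _; apply: pos2.
  move=> /andP[/eqP e1 /eqP e2]; split.
  - move=> i hi; apply: (zeroD k k'); exact: (@psumr_eq0P _ _ _ _ (fun i _ => pos1 k k' i) e1 i hi).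
  - move=> j; apply: (zeroD k k'); exact: (@psumr_eq0P _ _ _ _ (fun i _ => pos2 k k' i) e2 j isT).
have hkk : forall p, (p.+1 < n)%N -> exists k k' : 'I_n, (k : nat) = p /\ (k' : nat) = k.+1.
  move=> p hp; have hp0 : (p < n)%N by lia.
  by exists (Ordinal hp0), (Ordinal hp).
split.
- move=> x p a hp; have [k [k' [ek hk]]] := hkk p hp.
  case ha: (spin a != 0); last first.
    by move/negbFE: ha; rewrite spin_eq0 => /eqP ->.
  have [W1 _] := W0 k k' hk.
  have := W1 a ha (updn x k (z0 s) (z0 s)) (updn_k _ _ _ _) (updn_k' _ _ _ hk).
  rewrite /Dphi phi_sum !updn_updn ek => /eqP; rewrite mulf_eq0 (negbTE r2_neq0) /= subr_eq0.
  by move/eqP.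
- move=> x p a b hp hab; have [k [k' [ek hk]]] := hkk p hp.
  have [j [-> ->]] := bad_inv hab.
  have [_ W2] := W0 k k' hk.
  have := W2 j (updn x k (z0 s) (z0 s)) (updn_k _ _ _ _) (updn_k' _ _ _ hk).
  rewrite /Dchi chi_sum !updn_updn ek => /eqP; rewrite mulf_eq0 (negbTE r2_neq0) /= subr_eq0.
  by move/eqP.
Qed.


Lemma sum_enum_val (T : finType) (G : T -> algC) :
  \sum_(j : 'I_#|T|) G (enum_val j) = \sum_(y : T) G y.
Proof.
rewrite [RHS](reindex (@enum_val T predT)) //.
by exists enum_rank => [j _|y _]; rewrite ?enum_valK ?enum_rankK.
Qed.

Definition reps (s n : nat) : seq (conf s n) := enum [pred x : conf s n | canon x].
Definition x0 (s n : nat) : conf s n := [ffun=> z0 s].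

Lemma canon_inv s n (psi : conf s n -> algC) :
  (forall x p a, (p.+1 < n)%N -> psi (updn x p (z0 s) a) = psi (updn x p a (z0 s))) ->
  (forall x p a b, (p.+1 < n)%N -> bad a b -> psi (updn x p a b) = psi (updn x p (z0 s) (z0 s))) ->
  forall x, psi x = psi (can x).
Proof.
move=> H1 H2 x.
pose f := fun l : seq 'I_(2 * s + 1) => psi (conf_of n l).
have hp : forall (u v : seq 'I_(2 * s + 1)) a b, size (u ++ [:: a; b] ++ v) = n -> ((size u).+1 < n)%N.
  by move=> u v a b; rewrite !size_cat /=; lia.
have E := @connect_Cn s n f.
have [_ h] : EqR n f (lx x) (Cn (lx x)).
  apply: E.
  - move=> u v a hs; rewrite /f (conf_of_cat (z0 s) a (a := a) (b := z0 s)); last by move: hs; rewrite !size_cat.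
    rewrite H1; last by apply: (hp u v (z0 s) a).
    by rewrite -conf_of_cat //; move: hs; rewrite !size_cat.
  - move=> u v a b hab hs; rewrite /f (conf_of_cat a b (a := z0 s) (b := z0 s)); last by move: hs; rewrite !size_cat.
    rewrite H2 //; last by apply: (hp u v a b).
    by rewrite -conf_of_cat //; move: hs; rewrite !size_cat.
have := h [::] [::]; rewrite !cats0 /= size_lx => /(_ erefl).
by rewrite /f conf_ofK.
Qed.

Lemma reps_canon s n r : (r < size (reps s n))%N -> canon (nth (x0 s n) (reps s n) r).
Proof. by move=> hr; have := mem_nth (x0 s n) hr; rewrite mem_enum. Qed.

Lemma reps_nf_inj s n (r r' : nat) : (r < size (reps s n))%N -> (r' < size (reps s n))%N ->
  (nf (nth (x0 s n) (reps s n) r) == nf (nth (x0 s n) (reps s n) r')) = (r == r').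
Proof.
move=> hr hr'; rewrite -(nth_uniq (x0 s n) hr hr' (enum_uniq _)).
apply/eqP/eqP => [h|->//]; exact: canon_eq (reps_canon hr) (reps_canon hr') h.
Qed.

Lemma can_in_reps s n (y : conf s n) : can y \in reps s n.
Proof. by rewrite mem_enum inE canon_can. Qed.

Lemma dimker_eq s n : dimker s n = #|[pred x : conf s n | canon x]|.
Proof.
pose m := size (reps s n).
pose Fm : 'M[algC]_(m, #|conf s n|) :=
  \matrix_(r, j) ((nf (enum_val j) == nf (nth (x0 s n) (reps s n) r)) : nat)%:R.
pose Gm : 'M[algC]_(#|conf s n|, m) :=
  \matrix_(j, r) ((enum_val j == nth (x0 s n) (reps s n) r) : nat)%:R.
have FG : Fm *m Gm = 1%:M.
  apply/matrixP => r r'; rewrite !mxE.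
  under eq_bigr do rewrite !mxE.
  rewrite (sum_enum_val (fun y => ((nf y == nf (nth (x0 s n) (reps s n) r)) : nat)%:R *
                                   ((y == nth (x0 s n) (reps s n) r') : nat)%:R)).
  rewrite (bigD1 (nth (x0 s n) (reps s n) r')) //= eqxx mulr1 big1 ?addr0; last first.
    by move=> y /negbTE ->; rewrite mulr0.
  by rewrite reps_nf_inj // eq_sym.
have rankF : \rank Fm = m.
  apply/eqP; rewrite eqn_leq rank_leq_row /=.
  by have := mxrankM_maxl Fm Gm; rewrite FG mxrank1.
have FH : (Fm <= kermx (Hmat s n)^T)%MS.
  apply/sub_kermxP; apply/matrixP => r j; rewrite !mxE.
  under eq_bigr do rewrite !mxE.
  set w := nf (nth (x0 s n) (reps s n) r).
  rewrite (sum_enum_val (fun y => ((nf y == w) : nat)%:R * Hentry (enum_val j) y)).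
  under eq_bigr do rewrite mulrC.
  apply: ker_of_inv.
  - by move=> x p a hp; rewrite nf_swap.
  - by move=> x p a b hp hab; rewrite nf_bad.
have KF : (kermx (Hmat s n)^T <= Fm)%MS.
  apply/row_subP => i; set u := row i _.
  have hu : u *m (Hmat s n)^T = 0 by rewrite /u -row_mul mulmx_ker row0.
  pose psi := fun y : conf s n => u 0 (enum_rank y).
  have hk : forall x, \sum_(y : conf s n) Hentry x y * psi y = 0.
    move=> x.
    have e : (u *m (Hmat s n)^T) 0 (enum_rank x) = 0 by rewrite hu mxE.
    rewrite mxE in e; rewrite -[in RHS]e.
    under [RHS]eq_bigr => j _ do rewrite [(Hmat s n)^T _ _]mxE [Hmat s n _ _]mxE enum_rankK -[X in u 0 X]enum_valK.
    rewrite (sum_enum_val (fun y => u 0 (enum_rank y) * Hentry x y)).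
    by apply: eq_bigr => y _; rewrite mulrC.
  have [I1 I2] := inv_of_ker hk.
  have hc := canon_inv I1 I2.
  apply/submxP; exists (\row_r psi (nth (x0 s n) (reps s n) r)).
  apply/matrixP => a j; rewrite ord1 [RHS]mxE.
  under eq_bigr do rewrite !mxE.
  have -> : u 0 j = psi (enum_val j) by rewrite /psi enum_valK.
  set y := enum_val j.
  have hr0 : (index (can y) (reps s n) < m)%N by rewrite index_mem can_in_reps.
  rewrite (bigD1 (Ordinal hr0)) //= nth_index ?can_in_reps // nf_can eqxx mulr1.
  rewrite big1 ?addr0 -?hc // => r hr.
  rewrite (_ : (nf y == _) = false) ?mulr0 //.
  rewrite -(nf_can y) -{1}(nth_index (x0 s n) (can_in_reps y)).
  rewrite reps_nf_inj //; apply/negbTE; apply: contra hr => /eqP h.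
  by apply/eqP; apply: val_inj; rewrite /= h.
rewrite /dimker (cardE [pred x : conf s n | canon x]) -/(reps s n) -/m -rankF.
by apply/eqP; rewrite eqn_leq (mxrankS FH) (mxrankS KF).
Qed.

Unset Implicit Arguments.

Theorem corollary1 (s : nat) (hs : (2 <= s)%N) :
  (forall n : nat, (1 <= n)%N ->
     dimker s n = (\sum_(k < n.+1) #|Tset s k|)%N /\
     ((\sum_(k < n.+1) #|Tset s k|)%N%:R : algC)
       = (rplus s ^+ n.+1 + rminus s ^+ n.+1 - 2) / (2 * (s%:R - 1)))
  /\
  (forall eps : algC, 0 < eps -> exists N : nat, forall n : nat, (N <= n)%N ->
     `| (dimker s n)%:R / (rplus s ^+ n.+1 / (2 * (s%:R - 1))) - 1 | < eps).
Proof.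
have e1 : forall n, (\sum_(k < n.+1) #|Tset s k|)%N = dimker s n.
  move=> n; rewrite dimker_eq -sumb_card count_canon.
  by apply: eq_bigr => k _; rewrite card_Tset.
have e2 : forall n, ((\sum_(k < n.+1) #|Tset s k|)%N%:R : algC)
       = (rplus s ^+ n.+1 + rminus s ^+ n.+1 - 2) / (2 * (s%:R - 1)).
  move=> n.
  rewrite (eq_bigr (fun k : 'I_n.+1 => gk s k)); last by move=> k _; rewrite card_Tset.
  exact: (closed_form s (gk s) hs (gk0 s) (gk1 s) (gk_rec s)).
split.
  by move=> n _; split; [rewrite e1 | exact: e2].
move=> eps he; have [N hN] := asym s hs eps he.
exists N => n hn; rewrite -e1 e2; exact: hN.
Qed.
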